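(* For every integer $n\ge1$, $d_n \ge 2^{2^{n-1}}$.
   Context: A delta-matroid $(E,\mathcal F)$ consists of a finite ground set $E$ and a non-empty collection $\mathcal F$ of subsets of $E$ (the feasible sets) satisfying the symmetric exchange axiom: for all $X,Y\in\mathcal F$ and every $e\in X\triangle Y$ there exists $f\in X\triangle Y$ (possibly $f=e$) with $X\triangle\{e,f\}\in\mathcal F$. Let $d_n$ denote the number of labelled delta-matroids with ground set $[n]=\{1,\dots,n\}$, i.e. the number of collections $\mathcal F$ of subsets of $[n]$ such that $([n],\mathcal F)$ is a delta-matroid. *)

(* Defs.v *)
From mathcomp Require Import all_boot.
Set Implicit Arguments. Unset Strict Implicit. Unset Printing Implicit Defensive.

Definition symdiff (T : finType) (A B : {set T}) : {set T} := (A :\: B) :|: (B :\: A).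

Definition is_delta_matroid (n : nat) (F : {set {set 'I_n}}) : bool :=
  (F != set0) &&
  [forall X in F, forall Y in F, forall e in symdiff X Y,
     exists f in symdiff X Y, symdiff X [set e; f] \in F].

Definition num_delta_matroids (n : nat) : nat :=
  #|[set F : {set {set 'I_n}} | is_delta_matroid F]|.

(* Main.v *)
Require Import Defs.
From mathcomp Require Import all_boot.
From mathcomp Require Import zify.
Set Implicit Arguments. Unset Strict Implicit.

Lemma symdiff_card (T : finType) (A B : {set T}) :
  #|A| + #|B| = (#|A :&: B|).*2 + #|symdiff A B|.
Proof.
rewrite /symdiff cardsU.
have -> : (A :\: B) :&: (B :\: A) = set0.
  by apply/setP => x; rewrite !inE; case: (x \in A); case: (x \in B).
rewrite cards0 subn0 -(cardsID B A) -(cardsID A B) setIC -addnn; lia.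
Qed.

Lemma odd_symdiff (T : finType) (A B : {set T}) :
  odd #|symdiff A B| = odd #|A| (+) odd #|B|.
Proof.
have := symdiff_card A B => /(congr1 odd).
by rewrite oddD oddD odd_double /= => ->.
Qed.

Lemma symdiffK (T : finType) (X Y : {set T}) : symdiff X (symdiff X Y) = Y.
Proof.
by apply/setP => x; rewrite /symdiff !inE; case: (x \in X); case: (x \in Y).
Qed.

Definition Od n := [set S : {set 'I_n} | odd #|S|].

Definition phi n (G : {set {set 'I_n}}) := (G :\: Od n) :|: Od n.

Lemma phi_dm n (G : {set {set 'I_n}}) : 0 < n -> is_delta_matroid (phi G).
Proof.
move=> n0; apply/andP; split.
  apply/set0Pn; exists [set Ordinal n0]; by rewrite /phi !inE cards1.
apply/forallP => X; apply/implyP => XF; apply/forallP => Y; apply/implyP => YF.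
apply/forallP => e; apply/implyP => eXY.
have oddin : forall Z : {set 'I_n}, odd #|Z| -> Z \in phi G by move=> Z oZ; rewrite /phi !inE oZ orbT.
case oX: (odd #|X|); last first.
  apply/existsP; exists e; rewrite eXY /=; apply: oddin.
  by rewrite odd_symdiff setUid cards1 oX.
case: (pickP [pred f | (f \in symdiff X Y) && (f != e)]) => [f /andP [fXY fe] | none].
  apply/existsP; exists f; rewrite fXY /=; apply: oddin.
  by rewrite odd_symdiff cards2 eq_sym fe oX.
apply/existsP; exists e; rewrite eXY /= setUid.
have -> : [set e] = symdiff X Y.
  apply/setP => x; rewrite inE; apply/eqP/idP => [-> //|xin].
  by apply/eqP; move: (none x) => /= /negbT; rewrite xin /= negbK.
by rewrite symdiffK.
Qed.

Definition tog n (x : 'I_n) (S : {set 'I_n}) := symdiff S [set x].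

Lemma card_Od n : 0 < n -> #|Od n| = 2 ^ n.-1.
Proof.
move=> n0; set x := Ordinal n0.
have togK : involutive (tog x) by move=> S; apply/setP => y; rewrite /tog /symdiff !inE; case: (y \in S); case: (y == x).
have otog : forall S, odd #|tog x S| = ~~ odd #|S|.
  by move=> S; rewrite /tog odd_symdiff cards1 addbT.
have e1 : #|~: Od n| = #|Od n|.
  have -> : ~: Od n = [set tog x S | S in Od n].
    apply/setP => S; rewrite !inE; apply/idP/imsetP => [oS|[T TO ->]].
      by exists (tog x S); rewrite ?togK // inE otog.
    by rewrite otog negbK; move: TO; rewrite inE.
  by rewrite card_in_imset //; move=> A B _ _; exact: (can_inj togK).
have e2 := cardsC (Od n).
have e3 : #|{set 'I_n}| = 2 ^ n.
  by have := card_powerset [set: 'I_n]; rewrite cardsT card_ord => <-; apply: eq_card => S; rewrite !inE subsetT.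
rewrite e1 e3 in e2.
have h : 2 ^ n = 2 * 2 ^ n.-1 by rewrite -expnS prednK.
lia.
Qed.

Theorem corollary3p3 (n : nat) : 1 <= n -> 2 ^ (2 ^ n.-1) <= num_delta_matroids n.
Proof.
move=> n0.
set Ev := ~: Od n.
have cEv : #|Ev| = 2 ^ n.-1.
  have := cardsC (Od n); rewrite card_Od //.
  have -> : #|{set 'I_n}| = 2 ^ n.
    by have := card_powerset [set: 'I_n]; rewrite cardsT card_ord => <-; apply: eq_card => S; rewrite !inE subsetT.
  have h : 2 ^ n = 2 * 2 ^ n.-1 by rewrite -expnS prednK.
  rewrite /Ev; lia.
rewrite -cEv -card_powerset /num_delta_matroids.
rewrite -[#|powerset Ev|](card_in_imset (f := @phi n)); last first.
  move=> A B; rewrite !inE => sA sB Heq; apply/setP => S.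
  have := congr1 (fun F : {set {set 'I_n}} => S \in F) Heq; rewrite /phi !inE /=.
  case oS: (S \in Od n).
    have /setCP : S \notin Ev by rewrite inE oS.
    move=> nA; case: (boolP (S \in A)) => SA; first by have := subsetP sA S SA; rewrite inE oS.
    case: (boolP (S \in B)) => SB //; by have := subsetP sB S SB; rewrite inE oS.
  by move: oS; rewrite inE => ->; rewrite !orbF.
apply: subset_leq_card; apply/subsetP => F /imsetP [G _ ->]; rewrite inE; exact: phi_dm.
Qed.
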